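(* For every finite metric $(V,d)$ with root $r$, every $M>0$, and every Level-Prim tree $\mathcal H$ of $G$ (with respect to $r$ and $M$), we have $d(\mathcal H)\le 8\cdot\mathrm{MST}(G)$.
   Context: Levels: $V_0=\{u:d(r,u)\le M\}$, and for $i\ge1$, $V_i=\{u:2^{i-1}M<d(r,u)\le2^iM\}$. Write $V_{\le i}=\bigcup_{j\le i}V_j$ and $V_{<i}=V_{\le i-1}$, with $V_{<0}=\emptyset$. $G$ is the complete graph on $V$ weighted by $d$. $G[U]$ is the induced subgraph, and $G/U$ contracts $U$ to one vertex, keeping parallel edges. $\mathrm{MST}(G)$ is the minimum spanning tree weight, and $d(F)$ is the total weight of an edge set $F$. Level-Prim tree: $H_i$ is a minimum spanning tree of $G[V_{\le i}]/V_{<i}$, viewed as edges of $G$, and $\mathcal H=\bigcup_{i\ge0}H_i$. *)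

(* Defs.v *)
From HB Require Import structures.
From mathcomp Require Import all_boot all_order all_algebra.
Set Implicit Arguments. Unset Strict Implicit. Unset Printing Implicit Defensive.
Import Order.TTheory GRing.Theory Num.Theory.
Local Open Scope ring_scope.

Definition is_metric (R : realFieldType) (V : finType) (d : V -> V -> R) : Prop :=
  [/\ forall x y, d x y = 0 <-> x = y,
      forall x y, d x y = d y x &
      forall x y z, d x z <= d x y + d y z].

Definition level (R : realFieldType) (V : finType) (d : V -> V -> R) (r : V) (M : R)
  (i : nat) : {set V} :=
  if i is j.+1 then [set u | (2 ^+ j * M < d r u) && (d r u <= 2 ^+ j.+1 * M)]
  else [set u | d r u <= M].

Definition level_le (R : realFieldType) (V : finType) (d : V -> V -> R) (r : V) (M : R)
  (i : nat) : {set V} := \bigcup_(j < i.+1) level d r M j.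
Definition level_lt (R : realFieldType) (V : finType) (d : V -> V -> R) (r : V) (M : R)
  (i : nat) : {set V} := \bigcup_(j < i) level d r M j.

(* Edges of the complete graph G are two-element subsets {u,v} of V;
   the weight of {u,v} is d u v. *)
Definition ewt (R : realFieldType) (V : finType) (d : V -> V -> R) (e : {set V}) : R :=
  if [pick p : V * V | e == [set p.1; p.2]] is Some p then d p.1 p.2 else 0.

Definition wsum (R : realFieldType) (V : finType) (d : V -> V -> R)
  (F : {set {set V}}) : R := \sum_(e in F) ewt d e.

(* Contraction of U to a single vertex: u in U goes to None. *)
Definition cvert (V : finType) (U : {set V}) (u : V) : option V :=
  if u \in U then None else Some u.

Definition cverts (V : finType) (S U : {set V}) : {set option V} :=
  [set cvert U u | u in S].

(* Edges of G[S]/U (edges of G, parallel edges kept, loops discarded). *)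
Definition cedge (V : finType) (S U : {set V}) (e : {set V}) : bool :=
  [exists u, exists v, [&& u != v, e == [set u; v], u \in S, v \in S
                         & ~~ ((u \in U) && (v \in U))]].

Definition cadj (V : finType) (U : {set V}) (F : {set {set V}}) : rel (option V) :=
  fun x y => [exists u, exists v,
      [&& [set u; v] \in F, cvert U u == x & cvert U v == y]].

Definition spanning_tree (V : finType) (S U : {set V}) (F : {set {set V}}) : Prop :=
  [/\ {in F, forall e, cedge S U e},
      {in cverts S U &, forall x y, connect (cadj U F) x y} &
      #|F| = (#|cverts S U|).-1]%N.

Definition is_MST (R : realFieldType) (V : finType) (d : V -> V -> R)
  (S U : {set V}) (F : {set {set V}}) : Prop :=
  spanning_tree S U F /\
  forall T, spanning_tree S U T -> wsum d F <= wsum d T.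

Definition level_prim_tree (R : realFieldType) (V : finType) (d : V -> V -> R)
  (r : V) (M : R) (H : {set {set V}}) : Prop :=
  exists Hs : nat -> {set {set V}},
    (forall i, is_MST d (level_le d r M i) (level_lt d r M i) (Hs i)) /\
    (forall e, e \in H <-> exists i, e \in Hs i).

(* Main.v *)
Require Import Defs.
From HB Require Import structures.
From mathcomp Require Import all_boot all_order all_algebra.
From Stdlib Require Import Classical.
Set Implicit Arguments. Unset Strict Implicit. Unset Printing Implicit Defensive.
Import Order.TTheory GRing.Theory Num.Theory.
Local Open Scope ring_scope.

Lemma met_ge0 (R : realFieldType) (V : finType) (d : V -> V -> R) :
  is_metric d -> forall x y, 0 <= d x y.
Proof.
case=> H0 Hs Ht x y.
have := Ht x y x; rewrite (Hs y x) (proj2 (H0 x x) erefl) => h.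
by rewrite -(@pmulr_rge0 _ 2) // mulr2n mulrDl !mul1r.
Qed.

Lemma set2_eq (V : finType) (u v a b : V) :
  [set u; v] = [set a; b] -> (a = u /\ b = v) \/ (a = v /\ b = u).
Proof.
move=> E.
have ha : a \in [set u; v] by rewrite E set21.
have hb : b \in [set u; v] by rewrite E set22.
have hu : u \in [set a; b] by rewrite -E set21.
have hv : v \in [set a; b] by rewrite -E set22.
move: ha hb hu hv; rewrite !inE.
by case/orP=> /eqP ha; case/orP=> /eqP hb; subst;
  move=> /orP[]/eqP? /orP[]/eqP?; subst; auto.
Qed.

Lemma ewt_set2 (R : realFieldType) (V : finType) (d : V -> V -> R) :
  is_metric d -> forall u v, ewt d [set u; v] = d u v.
Proof.
move=> hm u v; rewrite /ewt.
case: pickP => [[a b] /= /eqP E|].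
  by case: (set2_eq E) => -[-> ->] //; case: hm.
by move/(_ (u, v)); rewrite eqxx.
Qed.

Lemma ewt_ge0 (R : realFieldType) (V : finType) (d : V -> V -> R) :
  is_metric d -> forall e, 0 <= ewt d e.
Proof.
by move=> hm e; rewrite /ewt; case: pickP => [p _|_ //]; apply: met_ge0.
Qed.

Lemma met0 (R : realFieldType) (V : finType) (d : V -> V -> R) :
  is_metric d -> forall x, d x x = 0.
Proof. by case=> h _ _ x; apply/h. Qed.

Lemma metS (R : realFieldType) (V : finType) (d : V -> V -> R) :
  is_metric d -> forall x y, d x y = d y x.
Proof. by case. Qed.

Lemma metT (R : realFieldType) (V : finType) (d : V -> V -> R) :
  is_metric d -> forall x y z, d x z <= d x y + d y z.
Proof. by case. Qed.

Fixpoint pathc (R : realFieldType) (V : finType) (d : V -> V -> R) (x : V) (s : seq V) : R :=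
  if s is y :: s' then d x y + pathc d y s' else 0.

Definition tourc (R : realFieldType) (V : finType) (d : V -> V -> R) (c : V) (s : seq V) : R :=
  pathc d c (rcons s c).

Lemma pathc_cat (R : realFieldType) (V : finType) (d : V -> V -> R) x s1 s2 :
  pathc d x (s1 ++ s2) = pathc d x s1 + pathc d (last x s1) s2.
Proof. by elim: s1 x => [|y s IH] x /=; rewrite ?add0r // IH addrA. Qed.

Lemma pathc_ge0 (R : realFieldType) (V : finType) (d : V -> V -> R) :
  is_metric d -> forall x s, 0 <= pathc d x s.
Proof.
move=> hm x s; elim: s x => [|y s IH] x //=.
by rewrite addr_ge0 // met_ge0.
Qed.

Lemma pathc_shift (R : realFieldType) (V : finType) (d : V -> V -> R) :
  is_metric d -> forall L c s, pathc d L s <= d L c + pathc d c s.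
Proof.
move=> hm L c [|y s] /=; first by rewrite addr0 met_ge0.
rewrite addrA lerD2r; by case: hm.
Qed.

Lemma tourc_cat (R : realFieldType) (V : finType) (d : V -> V -> R) :
  is_metric d -> forall c s1 s2, tourc d c (s1 ++ s2) <= tourc d c s1 + tourc d c s2.
Proof.
move=> hm c s1 s2; rewrite /tourc rcons_cat pathc_cat -(cats1 s1 c) pathc_cat /=.
rewrite addr0 -addrA lerD2l.
by apply: pathc_shift.
Qed.

Lemma tourc_move (R : realFieldType) (V : finType) (d : V -> V -> R) :
  is_metric d -> forall c a s, tourc d c s <= d c a *+ 2 + tourc d a s.
Proof.
move=> hm c a s; rewrite /tourc.
apply: le_trans (pathc_shift hm c a _) _.
rewrite mulr2n -addrA lerD2l -!cats1 !pathc_cat /= !addr0 addrCA lerD2l.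
have [_ hs ht] := hm.
by rewrite addrC (hs c a); apply: ht.
Qed.

Lemma pathc_subseq (R : realFieldType) (V : finType) (d : V -> V -> R) :
  is_metric d -> forall s1 s2 x, subseq s1 s2 -> pathc d x s1 <= pathc d x s2.
Proof.
move=> hm s1 s2; elim: s2 s1 => [|y s2 IH] s1 x.
  by move/eqP=> ->.
case: s1 => [_|z s1] /=; first by rewrite addr_ge0 ?met_ge0 ?pathc_ge0.
case: eqP => [<- /IH h|_ h]; first by rewrite lerD2l.
apply: le_trans (pathc_shift hm x y (z :: s1)) _.
by rewrite lerD2l; apply: (IH (z :: s1)).
Qed.

Lemma tourc_subseq (R : realFieldType) (V : finType) (d : V -> V -> R) :
  is_metric d -> forall s1 s2 c, subseq s1 s2 -> tourc d c s1 <= tourc d c s2.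
Proof.
move=> hm s1 s2 c h; rewrite /tourc; apply: pathc_subseq => //.
by rewrite -!cats1 cat_subseq.
Qed.

Definition relS (V : finType) (T : {set {set V}}) (A : {set V}) : rel V :=
  fun x y => [&& x \in A, y \in A & [set x; y] \in T].

Lemma relS_sym (V : finType) (T : {set {set V}}) (A : {set V}) : symmetric (relS T A).
Proof. by move=> x y; rewrite /relS andbCA setUC. Qed.

Lemma reach_closed (V : finType) (e : rel V) (X : {set V}) x y :
  x \in X -> (forall a b, a \in X -> e a b -> b \in X) -> connect e x y -> y \in X.
Proof.
move=> hx hc /connectP [p hp ->]; elim: p x hx hp => //= z p IH x hx /andP[exz hp].
exact: IH (hc _ _ hx exz) hp.
Qed.

Lemma reach_in (V : finType) (T : {set {set V}}) (A : {set V}) x y :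
  x \in A -> connect (relS T A) x y -> y \in A.
Proof. by move=> hx; apply: reach_closed => // a b _ /and3P[]. Qed.

Definition tedges (V : finType) (T : {set {set V}}) :=
  forall e, e \in T -> exists x y, x != y /\ e = [set x; y].

Lemma sum_coef_le (R : realFieldType) (V : finType) (d : V -> V -> R) (T : {set {set V}})
   (f g : {set V} -> nat) : is_metric d ->
  (forall e, e \in T -> f e <= g e)%N ->
  \sum_(e in T) (f e)%:R * ewt d e <= \sum_(e in T) (g e)%:R * ewt d e.
Proof.
move=> hm h; apply: ler_sum => e he; apply: ler_wpM2r; first exact: ewt_ge0.
by rewrite ler_nat h.
Qed.

Lemma sum_coefD (R : realFieldType) (V : finType) (d : V -> V -> R) (T : {set {set V}})
   (f g : {set V} -> nat) :
  \sum_(e in T) (f e)%:R * ewt d e + \sum_(e in T) (g e)%:R * ewt d e =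
  \sum_(e in T) (f e + g e)%N%:R * ewt d e.
Proof. by rewrite -big_split /=; apply: eq_bigr => e _; rewrite natrD mulrDl. Qed.

Lemma sum_coef1 (R : realFieldType) (V : finType) (d : V -> V -> R) (T : {set {set V}}) e0 :
  e0 \in T -> ewt d e0 = \sum_(e in T) (e == e0)%:R * ewt d e.
Proof.
move=> he; rewrite (bigD1 e0) //= eqxx mul1r big1 ?addr0 // => e /andP[_ /negbTE ->].
by rewrite mul0r.
Qed.

Lemma sum_coef_ge0 (R : realFieldType) (V : finType) (d : V -> V -> R) (T : {set {set V}})
   (f : {set V} -> nat) : is_metric d -> 0 <= \sum_(e in T) (f e)%:R * ewt d e.
Proof. by move=> hm; apply: sumr_ge0 => e _; rewrite mulr_ge0 ?ewt_ge0. Qed.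

Lemma sum_coefM2 (R : realFieldType) (V : finType) (d : V -> V -> R) (T : {set {set V}})
   (f : {set V} -> nat) :
  (\sum_(e in T) (f e)%:R * ewt d e) *+ 2 = \sum_(e in T) (f e * 2)%N%:R * ewt d e.
Proof.
by rewrite -sumrMnl; apply: eq_bigr => e _; rewrite natrM mulrAC mulr_natr.
Qed.

Lemma tour_ex (R : realFieldType) (V : finType) (d : V -> V -> R) (T : {set {set V}}) :
  is_metric d -> tedges T ->
  forall n (C : {set V}) c, (#|C| <= n)%N -> c \in C ->
  (forall y, y \in C -> connect (relS T C) c y) ->
  exists s : seq V, {subset C <= s} /\ {subset s <= C} /\
    tourc d c s <= \sum_(e in T) ((e \subset C) * 2)%N%:R * ewt d e.
Proof.
move=> hm hT n; elim: n => [|n IH] C c hC hc hconn.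
  by move: hC; rewrite leqn0 => /eqP /cards0_eq hC0; rewrite hC0 inE in hc.
case: (boolP [exists a1, [&& a1 \in C, a1 != c & [set c; a1] \in T]]) => [/existsP[a1 /and3P[a1C a1c ca1T]]|hno].
  pose C' := C :\ c.
  pose C1 := [set y in C' | connect (relS T C') a1 y].
  pose C2 := C :\: C1.
  have C'E : forall y, (y \in C') = (y != c) && (y \in C) by move=> y; rewrite !inE.
  have C1E : forall y, (y \in C1) = (y \in C') && connect (relS T C') a1 y by move=> y; rewrite inE.
  have C2E : forall y, (y \in C2) = (y \notin C1) && (y \in C) by move=> y; rewrite inE.
  clearbody C2 C1 C'.
  have a1C' : a1 \in C' by rewrite C'E a1c.
  have a1C1 : a1 \in C1 by rewrite C1E a1C' connect0.
  have cC1 : c \notin C1 by rewrite C1E C'E eqxx.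
  have C1C : C1 \subset C by apply/subsetP => y; rewrite C1E C'E => /andP[/andP[]].
  have cC2 : c \in C2 by rewrite C2E cC1.
  have a1C2 : a1 \notin C2 by rewrite C2E a1C1.
  have C2C : C2 \subset C by apply/subsetP => y; rewrite C2E => /andP[].
  have hC1 : (#|C1| <= n)%N.
    rewrite -ltnS; apply: leq_trans hC; apply: proper_card; rewrite properE C1C /=.
    by apply/negP => /subsetP /(_ c hc); rewrite (negbTE cC1).
  have hC2 : (#|C2| <= n)%N.
    rewrite -ltnS; apply: leq_trans hC; apply: proper_card; rewrite properE C2C /=.
    by apply/negP => /subsetP /(_ a1 a1C); rewrite (negbTE a1C2).
  have conn1 : forall y, y \in C1 -> connect (relS T C1) a1 y.
    move=> y; rewrite C1E => /andP[_ hy].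
    pose X := [set z | connect (relS T C1) a1 z].
    have : y \in X; last by rewrite inE.
    apply: (reach_closed _ _ hy); first by rewrite inE connect0.
    move=> a b; rewrite inE => ha hab.
    have aC1 : a \in C1 := reach_in a1C1 ha.
    have bC1 : b \in C1.
      move: aC1; rewrite C1E => /andP[_ ha'].
      move: (hab) => /and3P[_ bC' _].
      by rewrite C1E bC' (connect_trans ha' (connect1 hab)).
    rewrite inE; apply: connect_trans ha (connect1 _).
    by rewrite /relS aC1 bC1; case/and3P: hab.
  have conn2 : forall y, y \in C2 -> connect (relS T C2) c y.
    move=> y yC2.
    pose X := [set z | connect (relS T C2) c z] :|: C1.
    have : y \in X.
      apply: (reach_closed _ _ (hconn y (subsetP C2C y yC2))); first by rewrite !inE connect0.
      move=> a b; rewrite !in_setU => ha hab.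
      case bC1 : (b \in C1); first by rewrite orbT.
      rewrite orbF inE.
      have bC2 : b \in C2 by rewrite C2E bC1; case/and3P: hab.
      case/orP: ha => [|aC1]; first rewrite inE => ha.
        have aC2 : a \in C2 := reach_in cC2 ha.
        apply: connect_trans ha (connect1 _).
        by rewrite /relS aC2 bC2; case/and3P: hab.
      case: (eqVneq b c) => [->|bc]; first by apply: connect0.
      exfalso; move: bC1; rewrite C1E.
      have aC' : a \in C' by move: aC1; rewrite C1E => /andP[].
      have bC' : b \in C' by rewrite C'E bc; case/and3P: hab.
      have hab' : relS T C' a b by rewrite /relS aC' bC'; case/and3P: hab.
      move: aC1; rewrite C1E => /andP[_ ha1].
      by rewrite bC' (connect_trans ha1 (connect1 hab')).
    rewrite in_setU inE; move: yC2; rewrite C2E => /andP[/negbTE -> _].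
    by rewrite orbF.
  have [s1 [cov1 [sub1 cost1]]] := IH C1 a1 hC1 a1C1 conn1.
  have [s2 [cov2 [sub2 cost2]]] := IH C2 c hC2 cC2 conn2.
  exists (s2 ++ s1); split; [|split].
  - move=> y yC; rewrite mem_cat.
    by case yC1 : (y \in C1); [rewrite cov1 ?orbT | rewrite cov2 // C2E yC1].
  - move=> y; rewrite mem_cat => /orP[/sub2 /(subsetP C2C)|/sub1 /(subsetP C1C)] //.
  apply: le_trans (tourc_cat hm _ _ _) _.
  apply: le_trans (lerD (lexx _) (tourc_move hm c a1 s1)) _.
  rewrite -(ewt_set2 hm) (sum_coef1 _ ca1T) addrCA.
  apply: le_trans (lerD (lexx _) (lerD cost2 cost1)) _.
  rewrite sum_coefM2 !sum_coefD; apply: sum_coef_le => // e eT.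
  have [x [y [xy ->]]] := hT e eT.
  have xe : x \in [set x; y] by rewrite set21.
  have ye : y \in [set x; y] by rewrite set22.
  have f1 : ([set x; y] \subset C1) ==> ([set x; y] \subset C).
    by apply/implyP => h; apply: subset_trans h C1C.
  have f2 : ([set x; y] \subset C2) ==> ([set x; y] \subset C).
    by apply/implyP => h; apply: subset_trans h C2C.
  have f3 : ([set x; y] == [set c; a1]) ==> ([set x; y] \subset C).
    by apply/implyP => /eqP ->; apply/subsetP => z; rewrite !inE => /orP[]/eqP->.
  have f4 : ~~ (([set x; y] \subset C1) && ([set x; y] \subset C2)).
    apply/negP => /andP[/subsetP /(_ x xe) h1 /subsetP /(_ x xe)].
    by rewrite C2E h1.
  have f5 : ([set x; y] == [set c; a1]) ==> ~~ ([set x; y] \subset C1).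
    apply/implyP => /eqP ->; apply/negP => /subsetP /(_ c).
    by rewrite set21 (negbTE cC1) => /(_ isT).
  have f6 : ([set x; y] == [set c; a1]) ==> ~~ ([set x; y] \subset C2).
    apply/implyP => /eqP ->; apply/negP => /subsetP /(_ a1).
    by rewrite set22 (negbTE a1C2) => /(_ isT).
  move: f1 f2 f3 f4 f5 f6.
  by case: ([set x; y] \subset C1); case: ([set x; y] \subset C2);
     case: ([set x; y] == [set c; a1]); case: ([set x; y] \subset C).
exists [:: c]; split; [|split].
- move=> y yC.
  have : y \in [set c]; last by rewrite !inE => /eqP ->.
  apply: (reach_closed _ _ (hconn y yC)); first by rewrite set11.
  move=> a b; rewrite inE => /eqP -> /and3P[_ bC cbT].
  case: (eqVneq b c) => [->|bc]; first by rewrite set11.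
  by move/existsP: hno; case; exists b; rewrite bC bc cbT.
- by move=> y; rewrite inE => /eqP ->.
have [h0 _ _] := hm; rewrite /tourc /= (proj2 (h0 c c) erefl) !add0r.
exact: sum_coef_ge0.
Qed.

Fixpoint prevs (V : eqType) (z : V) (s : seq V) (u : V) : V :=
  if s is t :: s' then (if u == t then z else prevs t s' u) else z.

Lemma prevs_prop (V : eqType) (s : seq V) z u : uniq s -> u \in s ->
  prevs z s u = z \/ (prevs z s u \in s /\ (index (prevs z s u) s < index u s)%N).
Proof.
elim: s z => [|t s IH] z //= /andP[ts us]; rewrite inE.
case: eqP => [_ _|/eqP ut /= hu]; first by left.
have [->|[h1 h2]] := IH t us hu.
  right; split; first by rewrite mem_head.
  by rewrite /= eqxx eq_sym (negbTE ut).
right; rewrite inE h1 orbT; split => //.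
have pt : prevs t s u != t by apply: contraNneq ts => <-.
by rewrite /= eq_sym (negbTE pt) eq_sym (negbTE ut) ltnS.
Qed.

Lemma prevs_sum (R : realFieldType) (V : finType) (d : V -> V -> R) :
  is_metric d -> forall (s : seq V) z, uniq s ->
  \sum_(u <- s) d u (prevs z s u) = pathc d z s.
Proof.
move=> [_ hs _]; elim=> [|t s IH] z /=; first by rewrite big_nil.
move=> /andP[ts us]; rewrite big_cons eqxx hs -(IH t us); congr (_ + _).
apply: eq_big_seq => u us'; have -> // : (u == t) = false.
by apply/eqP => ut; move: ts; rewrite -ut us'.
Qed.

Lemma pathc_start (R : realFieldType) (V : finType) (d : V -> V -> R) :
  is_metric d -> forall (s : seq V) z c D,
  (forall t, t \in s -> d z t <= D + d c t) -> 0 <= D ->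
  pathc d z s <= D + tourc d c s.
Proof.
move=> hm [|t s] z c D ht hD /=; first by rewrite /tourc /= addr0 met0 // addr0.
rewrite /tourc /= addrA; apply: lerD; first by apply: ht; rewrite inE eqxx.
by rewrite -cats1 pathc_cat lerDl pathc_ge0.
Qed.

Lemma card_set2I (V : finType) (x y : V) (A : {set V}) : x != y ->
  #|[set x; y] :&: A| = ((x \in A) + (y \in A))%N.
Proof.
move=> xy; case xA : (x \in A); case yA : (y \in A).
- have -> : [set x; y] :&: A = [set x; y].
    by apply/setIidPl/subsetP => z; rewrite !inE => /orP[]/eqP->.
  by rewrite cards2 xy.
- have -> : [set x; y] :&: A = [set x].
    apply/setP => z; rewrite !inE; case: (eqVneq z x) => [->|zx] //=; rewrite ?xA //.
    by case: (eqVneq z y) => [->|] //; rewrite yA.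
  by rewrite cards1.
- have -> : [set x; y] :&: A = [set y].
    apply/setP => z; rewrite !inE; case: (eqVneq z y) => [->|zy] //=; rewrite ?yA ?orbT //.
    by case: (eqVneq z x) => [->|] //; rewrite xA.
  by rewrite cards1.
- have -> : [set x; y] :&: A = set0.
    apply/setP => z; rewrite !inE.
    by apply/negbTE/negP => /andP[/orP[]/eqP->]; rewrite ?xA ?yA.
  by rewrite cards0.
Qed.

Lemma comp_conn (V : finType) (T : {set {set V}}) (W : {set V}) a c y :
  let Cc := [set z in W | connect (relS T W) a z] in
  c \in Cc -> y \in Cc -> connect (relS T Cc) c y.
Proof.
move=> Cc hc hy.
have CcE : forall z, (z \in Cc) = (z \in W) && connect (relS T W) a z by move=> z; rewrite inE.
clearbody Cc.
have hcy : connect (relS T W) c y.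
  move: hc hy; rewrite !CcE => /andP[_ hc] /andP[_ hy].
  apply: connect_trans _ hy; by rewrite (sym_connect_sym (@relS_sym _ T W)).
pose X := [set z | connect (relS T Cc) c z].
have : y \in X; last by rewrite inE.
apply: (reach_closed _ _ hcy); first by rewrite inE connect0.
move=> u v; rewrite inE => hu huv.
have uC : u \in Cc := reach_in hc hu.
have vC : v \in Cc.
  move: (uC); rewrite CcE => /andP[_ hau].
  by rewrite CcE (connect_trans hau (connect1 huv)) andbT; case/and3P: huv.
rewrite inE; apply: connect_trans hu (connect1 _).
by rewrite /relS uC vC; case/and3P: huv.
Qed.

Definition Tconn (V : finType) (T : {set {set V}}) (r : V) :=
  forall X : {set V}, r \in X -> (forall x y, x \in X -> [set x; y] \in T -> y \in X) ->
  forall v, v \in X.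

Lemma level_ptr (R : realFieldType) (V : finType) (d : V -> V -> R) (T : {set {set V}}) r :
  is_metric d -> tedges T -> Tconn T r ->
  forall n (B K W : {set V}), (#|W| <= n)%N -> r \in B -> [disjoint W & B] ->
  (forall u w c, u \in K -> u \in W -> w \notin W -> w \notin B -> c \in W ->
      [set c; w] \in T -> d u r <= d u w) ->
  exists (p : V -> V) (rk : V -> nat),
    (forall u, u \in K :&: W -> p u \in B \/ (p u \in K :&: W /\ (rk (p u) < rk u)%N)) /\
    \sum_(u in K :&: W) d u (p u) <= \sum_(e in T) #|e :&: W|%:R * ewt d e.
Proof.
move=> hm hT hTc n; elim: n => [|n IH] B K W hW rB dWB gap.
  have W0 : W = set0 by apply: cards0_eq; move: hW; rewrite leqn0 => /eqP.
  exists id, (fun _ => 0%N); split; first by move=> u; rewrite W0 setI0 inE.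
  by rewrite W0 setI0 big_set0; apply: sum_coef_ge0.
case: (set_0Vmem W) => [W0|[a aW]].
  exists id, (fun _ => 0%N); split; first by move=> u; rewrite W0 setI0 inE.
  by rewrite W0 setI0 big_set0; apply: sum_coef_ge0.
pose Cc := [set z in W | connect (relS T W) a z].
have Cconn : forall c y, c \in Cc -> y \in Cc -> connect (relS T Cc) c y.
  by move=> c y; apply: comp_conn.
have CcE : forall z, (z \in Cc) = (z \in W) && connect (relS T W) a z by move=> z; rewrite inE.
clearbody Cc.
have aC : a \in Cc by rewrite CcE aW connect0.
have CW : Cc \subset W by apply/subsetP => z; rewrite CcE => /andP[].
have Cclosed : forall x y, x \in Cc -> y \in W -> [set x; y] \in T -> y \in Cc.
  move=> x y xC yW xyT; move: (xC); rewrite CcE => /andP[xW hax].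
  by rewrite CcE yW (connect_trans hax (connect1 _)) // /relS xW yW.
pose W' := W :\: Cc.
have W'E : forall z, (z \in W') = (z \notin Cc) && (z \in W) by move=> z; rewrite inE.
clearbody W'.
have rW : r \notin W by rewrite (disjointFl dWB rB).
have [c [w [cC [wW cwT]]]] : exists c w, [/\ c \in Cc, w \notin W & [set c; w] \in T].
  case: (boolP [exists c, exists w, [&& c \in Cc, w \notin W & [set c; w] \in T]]).
    by move=> /existsP[c /existsP[w /and3P[h1 h2 h3]]]; exists c, w.
  move=> hno; exfalso.
  have : a \in ~: Cc; last by rewrite inE aC.
  apply: hTc; first by rewrite inE CcE (negbTE rW).
  move=> x y; rewrite !inE => xC xyT; apply/negP => yC.
  case xW : (x \in W).
    by move: xC; rewrite (Cclosed y x yC xW) // setUC.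
  move/existsP: hno; apply; exists y; apply/existsP; exists x.
  by rewrite yC xW setUC xyT.
have cW : c \in W := subsetP CW c cC.
have [s [covs [subs costs]]] :=
  tour_ex hm hT (leqnn #|Cc|) cC (fun y yC => Cconn c y cC yC).
pose tau := undup [seq x <- s | x \in K].
have utau : uniq tau by apply: undup_uniq.
have tauE : forall x, (x \in tau) = (x \in K) && (x \in Cc).
  move=> x; rewrite mem_undup mem_filter.
  by apply/andP/andP => -[-> h]; split => //; [apply: subs | apply: covs].
have costtau : tourc d c tau <= tourc d c s.
  apply: tourc_subseq => //; apply: subseq_trans (undup_subseq _) (filter_subseq _ _).
pose z := if w \in B then w else r.
have zB : z \in B by rewrite /z; case: ifP.
have hW' : (#|W'| <= n)%N.
  rewrite -ltnS; apply: leq_trans hW; apply: proper_card; rewrite properE.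
  apply/andP; split; first by apply/subsetP => x; rewrite W'E => /andP[].
  by apply/negP => /subsetP /(_ a aW); rewrite W'E aC.
have W'W : W' \subset W by apply/subsetP => x; rewrite W'E => /andP[].
have dW'B : [disjoint W' & B] by apply: disjointWl W'W dWB.
have gap' : forall u w c, u \in K -> u \in W' -> w \notin W' -> w \notin B -> c \in W' ->
      [set c; w] \in T -> d u r <= d u w.
  move=> u w0 c0 uK uW' wW' wB cW' cwT0.
  move: (uW') (cW'); rewrite !W'E => /andP[_ uW] /andP[cC0 cW0].
  apply: (gap u w0 c0) => //.
  apply/negP => w0W; move: wW'; rewrite W'E w0W andbT negbK => w0C.
  by move: cC0; rewrite (Cclosed w0 c0 w0C cW0) // setUC.
have [p2 [rk2 [hp2 cost2]]] := IH B K W' hW' rB dW'B gap'.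
exists (fun u => if u \in Cc then prevs z tau u else p2 u).
exists (fun u => if u \in Cc then index u tau else rk2 u).
split.
  move=> u; rewrite inE => /andP[uK uW].
  case uC : (u \in Cc).
    have utau' : u \in tau by rewrite tauE uK uC.
    have [->|[h1 h2]] := prevs_prop z utau utau'; first by left.
    right; move: (h1); rewrite tauE => /andP[pK pC].
    by rewrite pC inE pK (subsetP CW _ pC).
  have uW' : u \in W' by rewrite W'E uC.
  have uKW' : u \in K :&: W' by rewrite inE uK uW'.
  have [h|[h1 h2]] := hp2 u uKW'; first by left.
  right; move: h1; rewrite inE => /andP[pK pW'].
  move: (pW'); rewrite W'E => /andP[/negbTE pC pW].
  by rewrite pC inE pK pW.
rewrite (bigID (fun u => u \in Cc)) /=.
have -> : \sum_(i in K :&: W | i \in Cc) d i (if i \in Cc then prevs z tau i else p2 i)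
    = \sum_(i <- tau) d i (prevs z tau i).
  rewrite big_uniq //; apply: eq_big => [x|x]; first by rewrite tauE inE -andbA (andb_idl (subsetP CW x)).
  by move=> /andP[_ ->].
have -> : \sum_(i in K :&: W | i \notin Cc) d i (if i \in Cc then prevs z tau i else p2 i)
    = \sum_(i in K :&: W') d i (p2 i).
  apply: eq_big => [x|x]; first by rewrite !inE W'E -andbA (andbC (x \in W)).
  by move=> /andP[_ /negbTE ->].
rewrite prevs_sum //.
have hstart : pathc d z tau <= ewt d [set c; w] + tourc d c tau.
  apply: pathc_start => //; last exact: ewt_ge0.
  move=> t; rewrite tauE => /andP[tK tC]; rewrite (ewt_set2 hm) /z.
  case: ifP => wB.
    by rewrite (metS hm c w); apply: metT.
  rewrite (metS hm r t); apply: le_trans (gap t w c tK (subsetP CW _ tC) wW (negbT wB) cW cwT) _.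
  by rewrite addrC (metS hm c t); apply: metT.
apply: le_trans (lerD (le_trans hstart (lerD (lexx _) (le_trans costtau costs))) cost2) _.
rewrite (sum_coef1 _ cwT) sum_coefD sum_coefD; apply: sum_coef_le => // e eT.
have [x [y [xy ->]]] := hT e eT.
rewrite !card_set2I // subUset !sub1set.
have hx : forall v, ((v \in Cc) + (v \in W'))%N = (v \in W).
  by move=> v; rewrite W'E; case vC: (v \in Cc) => /=; rewrite ?(subsetP CW _ vC).
rewrite -(hx x) -(hx y).
case: (eqVneq [set x; y] [set c; w]) => [E|_].
  have wC : w \notin Cc by apply: contra wW; apply: (subsetP CW).
  have wW' : w \notin W' by rewrite W'E negb_and wW orbT.
  have cW' : c \notin W' by rewrite W'E cC.
  by case: (set2_eq E) => -[<- <-]; rewrite (negbTE wC) (negbTE wW') (negbTE cW') cC.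
by case: (x \in Cc); case: (y \in Cc); case: (x \in W'); case: (y \in W').
Qed.

Lemma ptr_tree (R : realFieldType) (V : finType) (d : V -> V -> R)
  (S U B : {set V}) (z : V) (p : V -> V) (rk : V -> nat) :
  is_metric d -> B = U :|: [set z] -> z \in S -> U \subset S -> (U = set0 \/ z \in U) ->
  (forall u, u \in S :\: B -> p u \in B \/ (p u \in S :\: B /\ (rk (p u) < rk u)%N)) ->
  spanning_tree S U [set [set u; p u] | u in S :\: B] /\
  wsum d [set [set u; p u] | u in S :\: B] = \sum_(u in S :\: B) d u (p u).
Proof.
move=> hm BE zS US Uz hp.
set K := S :\: B.
have BS : B \subset S by rewrite BE subUset US sub1set.
have KE : forall u, (u \in K) = (u \notin B) && (u \in S) by move=> u; rewrite inE.
have KU : forall u, u \in K -> u \notin U.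
  by move=> u; rewrite KE BE inE negb_or => /andP[/andP[]].
have Kz : forall u, u \in K -> u != z.
  by move=> u; rewrite KE BE !inE negb_or => /andP[/andP[_]].
have pS : forall u, u \in K -> p u \in S.
  move=> u uK; case: (hp u uK) => [/(subsetP BS)//|[]]; by rewrite KE => /andP[].
have pu : forall u, u \in K -> p u != u.
  move=> u uK; case: (hp u uK) => [pB|[_ h]].
    by apply: contraTneq pB => ->; move: uK; rewrite KE => /andP[].
  by apply: contraTneq h => ->; rewrite ltnn.
have inj : {in K &, injective (fun u => [set u; p u])}.
  move=> u v uK vK /= E; case: (set2_eq E) => -[// h1 h2].
  case: (hp u uK) => [|[_ h3]]; first by rewrite -h1; move: vK; rewrite KE => /andP[/negbTE ->].
  case: (hp v vK) => [|[_ h4]]; first by rewrite h2; move: uK; rewrite KE => /andP[/negbTE ->].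
  by move: h3 h4; rewrite -h1 h2 => h3 h4; move: (ltn_trans h3 h4); rewrite ltnn.
have cvB : forall b, b \in B -> cvert U b = cvert U z.
  move=> b; rewrite BE !inE => /orP[bU|/eqP -> //].
  case: Uz => [U0|zU]; first by rewrite U0 inE in bU.
  by rewrite /cvert bU zU.
have cvK : forall u, u \in K -> cvert U u = Some u by move=> u uK; rewrite /cvert (negbTE (KU u uK)).
have adj : forall u, u \in K -> cadj U [set [set u; p u] | u in K] (cvert U u) (cvert U (p u)).
  move=> u uK; apply/existsP; exists u; apply/existsP; exists (p u).
  by rewrite !eqxx !andbT; apply/imsetP; exists u.
have cadjS : symmetric (cadj U [set [set u; p u] | u in K]).
  move=> x y; apply/existsP/existsP => -[u /existsP[v /and3P[h1 h2 h3]]];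
    exists v; apply/existsP; exists u; by rewrite setUC h1 h2 h3.
have toz : forall n a, (rk a < n)%N -> a \in S ->
    connect (cadj U [set [set u; p u] | u in K]) (cvert U a) (cvert U z).
  elim=> [//|n IH] a ha aS.
  case aB : (a \in B); first by rewrite cvB.
  have aK : a \in K by rewrite KE aB.
  apply: connect_trans (connect1 (adj a aK)) _.
  case: (hp a aK) => [pB|[paK h]]; first by rewrite cvB.
  by apply: IH; [apply: leq_trans h _ | apply: pS].
split.
  split.
  - move=> e /imsetP[u uK ->]; apply/existsP; exists u; apply/existsP; exists (p u).
    rewrite eq_sym pu //= eqxx pS // (negbTE (KU u uK)) /= andbT.
    by move: uK; rewrite KE => /andP[].
  - move=> x y /imsetP[a aS ->] /imsetP[b bS ->].
    apply: connect_trans (toz _ a (ltnSn _) aS) _.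
    by rewrite (sym_connect_sym cadjS); apply: toz (ltnSn _) bS.
  rewrite card_in_imset //.
  have -> : cverts S U = cvert U z |: [set cvert U u | u in K].
    apply/setP => x; rewrite inE; apply/imsetP/idP.
      move=> [a aS ->]; case aB : (a \in B); first by rewrite cvB ?set11.
      by apply/orP; right; apply/imsetP; exists a; rewrite // KE aB.
    case/orP => [/set1P ->|/imsetP[a aK ->]]; first by exists z.
    by exists a => //; move: aK; rewrite KE => /andP[].
  rewrite cardsU1 card_in_imset; last first.
    by move=> u v uK vK /=; rewrite !cvK // => -[].
  suff -> : cvert U z \notin [set cvert U u | u in K] by [].
  apply/imsetP => -[u uK]; rewrite (cvK u uK).
  case: Uz => [U0|zU]; last by rewrite /cvert zU.
  by rewrite /cvert U0 inE => -[E]; move: (Kz u uK); rewrite E eqxx.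
rewrite /wsum big_imset //; apply: eq_bigr => u _; exact: ewt_set2.
Qed.

Lemma level_ub (R : realFieldType) (V : finType) (d : V -> V -> R) r M i x :
  x \in level d r M i -> d r x <= 2 ^+ i * M.
Proof. by case: i => [|j]; rewrite /level inE ?expr0 ?mul1r // => /andP[]. Qed.

Lemma level_lb (R : realFieldType) (V : finType) (d : V -> V -> R) r M j x :
  x \in level d r M j.+1 -> 2 ^+ j * M < d r x.
Proof. by rewrite /level inE => /andP[]. Qed.

Lemma exp_mono (R : realFieldType) (M : R) i j : 0 < M -> (i <= j)%N -> 2 ^+ i * M <= 2 ^+ j * M.
Proof.
move=> hM hij; rewrite ler_pM2r //; apply: ler_weXn2l => //.
by rewrite ler1n.
Qed.

Lemma level_uniq (R : realFieldType) (V : finType) (d : V -> V -> R) r M i j x :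
  0 < M -> x \in level d r M i -> x \in level d r M j -> i = j.
Proof.
move=> hM.
wlog hij : i j / (i <= j)%N.
  move=> H hi hj; case: (leqP i j) => h; first exact: H.
  by apply/esym/H => //; apply: ltnW.
move=> hi hj; case: (ltngtP i j) hij => // h _.
case: j h hj => // j h hj.
have := lt_le_trans (level_lb hj) (level_ub hi).
by rewrite ltNge exp_mono.
Qed.

Lemma in_level_le (R : realFieldType) (V : finType) (d : V -> V -> R) r M i x :
  (x \in level_le d r M i) = [exists j : 'I_i.+1, x \in level d r M j].
Proof.
apply/bigcupP/existsP => [[j _ h]|[j h]]; by exists j.
Qed.

Lemma in_level_lt (R : realFieldType) (V : finType) (d : V -> V -> R) r M i x :
  (x \in level_lt d r M i) = [exists j : 'I_i, x \in level d r M j].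
Proof.
apply/bigcupP/existsP => [[j _ h]|[j h]]; by exists j.
Qed.

Lemma gap_le (R : realFieldType) (V : finType) (d : V -> V -> R) r M k x :
  x \notin level_le d r M k -> 2 ^+ k * M < d r x.
Proof.
rewrite in_level_le negb_exists => /forallP h.
elim: k h => [|k IH] h.
  by move: (h ord0); rewrite /level inE -ltNge expr0 mul1r.
have h1 : forall j : 'I_k.+1, x \notin level d r M j.
  by move=> j; move: (h (widen_ord (leqnSn _) j)).
have h2 := IH h1; have h3 := h ord_max.
by move: h3; rewrite /level /= inE negb_and h2 /= -ltNge.
Qed.

Definition Yset (R : realFieldType) (V : finType) (d : V -> V -> R) (r : V) (M : R) i :=
  (level d r M i :|: level d r M i.+1) :\: (level_lt d r M i :|: [set r]).

Lemma level_bound (R : realFieldType) (V : finType) (d : V -> V -> R) r M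
   (T Hi : {set {set V}}) i :
  is_metric d -> 0 < M -> tedges T -> Tconn T r ->
  is_MST d (level_le d r M i) (level_lt d r M i) Hi ->
  wsum d Hi <= \sum_(e in T) #|e :&: Yset d r M i|%:R * ewt d e.
Proof.
move=> hm hM hT hTc [_ hmin].
set S := level_le d r M i; set U := level_lt d r M i.
set B := U :|: [set r]; set K := S :\: B; set W := Yset d r M i.
have r0 : r \in level d r M 0 by rewrite /level inE met0 // ltW.
have rS : r \in S by rewrite /S in_level_le; apply/existsP; exists ord0.
have US : U \subset S.
  apply/subsetP => x; rewrite /U /S in_level_lt in_level_le => /existsP[j hj].
  by apply/existsP; exists (widen_ord (leqnSn _) j).
have Uz : U = set0 \/ r \in U.
  case: (posnP i) => [i0|ip].
    left; apply/setP => x; rewrite /U in_level_lt inE; apply/existsP => -[j _].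
    by have := ltn_ord j; rewrite {2}i0.
  by right; rewrite /U in_level_lt; apply/existsP; exists (Ordinal ip).
have Kl : forall u, u \in K -> u \in level d r M i.
  move=> u; rewrite !inE negb_or => /andP[/andP[uU _]].
  rewrite /S in_level_le => /existsP[j hj].
  case: (ltngtP j i) => [ji|ji|ji].
  - by move: uU; rewrite /U in_level_lt; case/existsP; exists (Ordinal ji).
  - by move: (ltn_ord j); rewrite ltnS leqNgt ji.
  - by rewrite -ji.
have KW : K \subset W.
  apply/subsetP => u uK; rewrite /W /Yset inE !in_setU (Kl u uK) andbT.
  by move: uK; rewrite /K /B in_setD in_setU => /andP[].
have gap : forall u w c, u \in K -> u \in W -> w \notin W -> w \notin B -> c \in W ->
      [set c; w] \in T -> d u r <= d u w.
  move=> u w _ uK _ wW wB _ _.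
  have wle : w \notin level_le d r M i.+1.
    rewrite in_level_le negb_exists; apply/forallP => j; apply/negP => wj.
    case: (ltnP j i) => ji.
      move: wB; rewrite !inE negb_or /U in_level_lt => /andP[/existsP h _]; apply: h.
      by exists (Ordinal ji).
    move: wW; rewrite /W /Yset in_setD (negbTE wB) /= in_setU negb_or => /andP[h1 h2].
    have : (j == i :> nat) || (j == i.+1 :> nat).
      by move: (ltn_ord j); rewrite ltnS leq_eqVlt ltnS => /orP[->|h]; rewrite ?orbT // eqn_leq ji h.
    by case/orP => /eqP E; move: wj; rewrite E => wj; [move/negP: h1 | move/negP: h2]; apply.
  have h1 := level_ub (Kl u uK).
  have h2 := gap_le wle.
  have h3 : d r w <= d r u + d u w by apply: metT.
  rewrite (metS hm u r).
  have h4 : d r u + d r u <= 2 ^+ i.+1 * M.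
    by rewrite exprS -mulrA mulr_natl mulr2n lerD.
  have := lt_le_trans (le_lt_trans h4 h2) h3.
  by rewrite ltrD2l => /ltW.
have rB : r \in B by rewrite /B in_setU set11 orbT.
have dWB : [disjoint W & B].
  by rewrite disjoints_subset; apply/subsetP => x; rewrite /W /Yset in_setD in_setC => /andP[].
have [p [rk [hp cost]]] := level_ptr hm hT hTc (leqnn #|W|) rB dWB gap.
have KWE : K :&: W = K by apply/setIidPl.
rewrite KWE in hp cost.
have [ST wF] := @ptr_tree _ _ d S U B r p rk hm (erefl B) rS US Uz hp.
by apply: le_trans (hmin _ ST) _; rewrite wF.
Qed.

Lemma levels_fin (R : realFieldType) (V : finType) (d : V -> V -> R) r M :
  0 < M -> exists N, (0 < N)%N /\ forall i x, (N <= i)%N -> x \notin level d r M i.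
Proof.
move=> hM.
suff [N hN] : exists N, forall x, x \in enum V -> forall i, (N <= i)%N -> x \notin level d r M i.
  exists N.+1; split => // i x hi; apply: hN; first by rewrite mem_enum.
  exact: ltnW.
elim: (enum V) => [|x s [N hN]]; first by exists 0%N.
case: (classic (exists j, x \in level d r M j)) => [[j hj]|hno].
  exists (maxn N j.+1) => y; rewrite inE => /orP[/eqP ->|ys] i hi.
    apply/negP => hi'; have E := level_uniq hM hj hi'.
    by move: hi; rewrite geq_max -E ltnn andbF.
  by apply: hN => //; apply: leq_trans hi; apply: leq_maxl.
exists N => y; rewrite inE => /orP[/eqP ->|ys] i hi; last exact: hN.
by apply/negP => h; apply: hno; exists i.
Qed.

Lemma sum_once (f : nat -> bool) N :
  (forall i j, f i -> f j -> i = j) -> (\sum_(i < N) f i <= 1)%N.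
Proof.
move=> hf; elim: N => [|N IH]; first by rewrite big_ord0.
rewrite big_ord_recr /=; case fN : (f N); last by rewrite addn0.
rewrite big1 // => i _; case fi : (f i) => //.
by move: (ltn_ord i); rewrite (hf _ _ fi fN) ltnn.
Qed.

Lemma Y_count (R : realFieldType) (V : finType) (d : V -> V -> R) r M N x :
  0 < M -> (\sum_(i < N) (x \in Yset d r M i) <= 2)%N.
Proof.
move=> hM.
have h1 : (\sum_(i < N) (x \in Yset d r M i) <=
   \sum_(i < N) ((x \in level d r M i) + (x \in level d r M i.+1)))%N.
  apply: leq_sum => i _; rewrite /Yset in_setD (in_setU x (level d r M i)).
  move: (x \in level d r M i) (x \in level d r M i.+1) (~~ _) => a b c.
  by case: a; case: b; case: c.
apply: leq_trans h1 _.
rewrite big_split /= (_ : 2 = 1 + 1)%N //.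
apply: leq_add.
  by apply: (@sum_once (fun i => x \in level d r M i)) => i j hi hj; apply: level_uniq hM hi hj.
apply: (@sum_once (fun i => x \in level d r M i.+1)) => i j hi hj.
by case: (level_uniq hM hi hj).
Qed.

Unset Implicit Arguments.

(* MST(G) is the weight of a minimum spanning tree T of G = G[V]/emptyset. *)
Theorem lemma5 (R : realFieldType) (V : finType) (d : V -> V -> R) (r : V) (M : R)
  (H T : {set {set V}}) :
  is_metric d -> 0 < M -> level_prim_tree d r M H ->
  is_MST d [set: V] set0 T ->
  wsum d H <= 8%:R * wsum d T.
Proof.
move=> hm hM [Hs [hHs HE]] [[ced conn _] _].
have hT : tedges T.
  move=> e eT; have /existsP[u /existsP[v /and5P[uv /eqP E _ _ _]]] := ced e eT.
  by exists u, v.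
have cv : forall x, cvert (set0 : {set V}) x = Some x by move=> x; rewrite /cvert inE.
have hTc : Tconn T r.
  move=> X rX hX v.
  have h1 : cvert set0 r \in cverts [set: V] set0 by apply/imsetP; exists r.
  have h2 : cvert set0 v \in cverts [set: V] set0 by apply/imsetP; exists v.
  have hc := conn _ _ h1 h2; rewrite !cv in hc.
  have : Some v \in [set Some x | x in X].
    apply: (reach_closed _ _ hc); first by apply/imsetP; exists r.
    move=> a b /imsetP[x xX ->] /existsP[u /existsP[w /and3P[uwT /eqP hu /eqP hw]]].
    rewrite cv in hu hw; case: hu => hu; subst.
    by apply/imsetP; exists w => //; apply: hX xX uwT.
  by case/imsetP => x xX [->].
have [N [N0 hN]] := levels_fin d r hM.
have Hs0 : forall i, (N <= i)%N -> Hs i = set0.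
  move=> i hi; have [[_ _ hc] _] := hHs i.
  have SU : level_le d r M i = level_lt d r M i.
    apply/setP => x; rewrite in_level_le in_level_lt; apply/existsP/existsP => -[j hj].
      have ji : (j < i)%N.
        move: (ltn_ord j); rewrite ltnS leq_eqVlt => /orP[/eqP E|//].
        by move/negP: (hN i x hi) => h; exfalso; apply: h; rewrite -E.
      by exists (Ordinal ji).
    by exists (widen_ord (leqnSn _) j).
  have i0 : (0 < i)%N by apply: leq_trans N0 hi.
  have rU : r \in level_lt d r M i.
    rewrite in_level_lt; apply/existsP; exists (Ordinal i0).
    by rewrite /level inE met0 // ltW.
  have E : cverts (level_le d r M i) (level_lt d r M i) = [set None].
    rewrite /cverts SU; apply/setP => x; rewrite inE; apply/imsetP/eqP => [[y yU ->]|->].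
      by rewrite /cvert yU.
    by exists r; rewrite // /cvert rU.
  by rewrite E cards1 /= in hc; apply: cards0_eq.
have step1 : wsum d H <= \sum_(i < N) wsum d (Hs i).
  rewrite /wsum.
  apply: (@le_trans _ _ (\sum_(e in H) \sum_(i < N) (e \in Hs i)%:R * ewt d e)).
    apply: ler_sum => e eH; have [i0 ei0] := (HE e).1 eH.
    have hi0 : (i0 < N)%N.
      by rewrite ltnNge; apply/negP => h; move: ei0; rewrite Hs0 // inE.
    rewrite (bigD1 (Ordinal hi0)) //= ei0 mul1r lerDl.
    by apply: sumr_ge0 => i _; rewrite mulr_ge0 ?ewt_ge0.
  apply: le_trans (_ : _ <= \sum_e \sum_(i < N) (e \in Hs i)%:R * ewt d e) _.
    rewrite [X in _ <= X](bigID (fun e => e \in H)) /= lerDl.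
    by apply: sumr_ge0 => e _; apply: sumr_ge0 => i _; rewrite mulr_ge0 ?ewt_ge0.
  rewrite exchange_big /=; apply: ler_sum => i _; rewrite [X in _ <= X]big_mkcond /=.
  by apply: ler_sum => e _; case: (e \in Hs i); rewrite ?mul1r ?mul0r.
apply: le_trans step1 _.
have step2 : \sum_(i < N) wsum d (Hs i) <=
    \sum_(i < N) \sum_(e in T) #|e :&: Yset d r M i|%:R * ewt d e.
  by apply: ler_sum => i _; apply: level_bound hm hM hT hTc (hHs i).
apply: le_trans step2 _.
rewrite exchange_big /= /wsum mulr_sumr; apply: ler_sum => e eT.
rewrite -mulr_suml -natr_sum; apply: ler_wpM2r; first exact: ewt_ge0.
rewrite ler_nat; have [x [y [xy ->]]] := hT e eT.
under eq_bigr do rewrite card_set2I //.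
rewrite big_split /=.
apply: (@leq_trans 4); last by [].
by rewrite (_ : 4 = 2 + 2)%N //; apply: leq_add; apply: Y_count.
Qed.
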